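(* Let $\pi\in\mathsf{G}_{r,n}$ and $a=\text{A-code}(\pi)$. Then, for each $0\le t\le r-1$, (1) $\mathsf{Rmil}(\pi)=\mathsf{Max}(a)$ and $\mathsf{Rmil}^t(\pi)=\mathsf{Max}^t(a)$; (2) $\mathsf{Lmil}(\pi)=\mathsf{Min}(a)$ and $\mathsf{Lmil}^t(\pi)=\mathsf{Min}^t(a)$; (3) $\mathsf{Lmap}(\pi)=\mathsf{Rmil}(a)$ and $\mathsf{Lmap}^t(\pi)=\mathsf{Rmil}^t(a)$; (4) $\mathsf{Lmal}(\pi)=\mathsf{Rmip}(a)$ and $\mathsf{Lmal}^t(\pi)=\mathsf{Rmip}^t(a)$.
   Context: $\mathsf{G}_{r,n}=C_r\wr\mathfrak S_n$: elements are words $\pi=\sigma_1^{[z_1]}\cdots\sigma_n^{[z_n]}$ with $\sigma\in\mathfrak S_n$ (base values) and colors $z_i\in\{0,\dots,r-1\}$. A-code: set $\pi^{(n)}=\pi$; for $j=n,\dots,1$, if the letter with base value $j$ is at position $p$ of $\pi^{(j)}$ with color $t$, put $c_j=p$, $e_j=t$, and delete that letter to get $\pi^{(j-1)}$; $\text{A-code}(\pi)=(c_1^{[e_1]},\dots,c_n^{[e_n]})$. Statistics of $\pi$: $\mathsf{Rmil}(\pi)=\{\sigma_i^{[z_i]}:\sigma_i<\sigma_j\ \forall j>i\}$; $\mathsf{Lmil}(\pi)=\{\sigma_i^{[z_i]}:\sigma_i<\sigma_j\ \forall j<i\}$; $\mathsf{Lmal}(\pi)=\{\sigma_i^{[z_i]}:\sigma_i>\sigma_j\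 \forall j<i\}$; $\mathsf{Lmap}(\pi)=\{i^{[z_i]}:\sigma_i>\sigma_j\ \forall j<i\}$. Statistics of a sequence $a=(c_1^{[e_1]},\dots,c_n^{[e_n]})$: $\mathsf{Max}(a)=\{i^{[e_i]}:c_i=i\}$; $\mathsf{Min}(a)=\{i^{[e_i]}:c_i=1\}$; $\mathsf{Rmil}(a)=\{c_i^{[e_i]}:c_i<c_j\ \forall j>i\}$; $\mathsf{Rmip}(a)=\{i^{[e_i]}:c_i<c_j\ \forall j>i\}$. For any such set $S$ of colored letters and $t\in\{0,\dots,r-1\}$, $S^t:=\{k: k^{[t]}\in S\}$ (e.g. $\mathsf{Rmil}^t(\pi)$, $\mathsf{Max}^t(a)$). *)

(* Defs.v *)
From mathcomp Require Import all_boot.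
Set Implicit Arguments. Unset Strict Implicit. Unset Printing Implicit Defensive.

(* A colored letter k^[t] is the pair (k, t) : nat * nat.
   A colored word / colored sequence is a seq of colored letters;
   positions and values are 1-based as in the paper: the i-th entry
   (1-based) is stored at 0-based index i-1. *)
Definition cletter := (nat * nat)%type.
Definition cword := seq cletter.

Definition letter_at (w : cword) (i : nat) : cletter := nth (0, 0) w i.

Definition in_G (r n : nat) (w : cword) : bool :=
  perm_eq (map fst w) (iota 1 n) && all (fun x => x.2 < r) w.

Definition delete_at (p : nat) (w : cword) : cword := take p w ++ drop p.+1 w.

Fixpoint acode_rec (j : nat) (w : cword) : cword :=
  match j with
  | 0 => [::]
  | j'.+1 =>
      let p := index j (map fst w) in
      let t := (letter_at w p).2 in
      rcons (acode_rec j' (delete_at p w)) (p.+1, t)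
  end.

Definition acode (n : nat) (w : cword) : cword := acode_rec n w.

Definition Rmil (w : cword) : seq cletter :=
  [seq letter_at w i | i <- iota 0 (size w) &
     all (fun j => (letter_at w i).1 < (letter_at w j).1) (iota i.+1 (size w - i.+1))].

Definition Lmil (w : cword) : seq cletter :=
  [seq letter_at w i | i <- iota 0 (size w) &
     all (fun j => (letter_at w i).1 < (letter_at w j).1) (iota 0 i)].

Definition Lmal (w : cword) : seq cletter :=
  [seq letter_at w i | i <- iota 0 (size w) &
     all (fun j => (letter_at w i).1 > (letter_at w j).1) (iota 0 i)].

Definition Lmap (w : cword) : seq cletter :=
  [seq (i.+1, (letter_at w i).2) | i <- iota 0 (size w) &
     all (fun j => (letter_at w i).1 > (letter_at w j).1) (iota 0 i)].

Definition Max (a : cword) : seq cletter :=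
  [seq (i.+1, (letter_at a i).2) | i <- iota 0 (size a) & (letter_at a i).1 == i.+1].

Definition Min (a : cword) : seq cletter :=
  [seq (i.+1, (letter_at a i).2) | i <- iota 0 (size a) & (letter_at a i).1 == 1].

(* Rmil(a) is the same notion as Rmil of a word (applied to the c_i). *)

Definition Rmip (a : cword) : seq cletter :=
  [seq (i.+1, (letter_at a i).2) | i <- iota 0 (size a) &
     all (fun j => (letter_at a i).1 < (letter_at a j).1) (iota i.+1 (size a - i.+1))].

Definition colorpart (S : seq cletter) (t : nat) : seq nat :=
  [seq x.1 | x <- S & x.2 == t].

(* Main.v *)
Require Import Defs.
From mathcomp Require Import all_boot.
From mathcomp Require Import zify.
Set Implicit Arguments. Unset Strict Implicit. Unset Printing Implicit Defensive.

Definition valid n (w : cword) := perm_eq (map fst w) (iota 1 n).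

Lemma memP_stat (T : eqType) (f : nat -> T) (P : pred nat) m x :
  reflect (exists2 i, i < m & P i /\ x = f i) (x \in [seq f i | i <- iota 0 m & P i]).
Proof.
apply: (iffP mapP) => [[i]|[i lt [Pi ->]]].
  by rewrite mem_filter mem_iota => /andP[Pi /andP[_ lt]] ->; exists i.
by exists i; rewrite // mem_filter mem_iota Pi lt.
Qed.

Lemma all_iotaP (P : pred nat) a b :
  all P (iota a (b - a)) <-> (forall j, a <= j < b -> P j).
Proof.
split => [/allP H j Hj | H]; first by apply: H; rewrite mem_iota; lia.
by apply/allP => j; rewrite mem_iota => Hj; apply: H; lia.
Qed.

Lemma all_iota0P (P : pred nat) b :
  all P (iota 0 b) <-> (forall j, j < b -> P j).
Proof.
split => [/allP H j Hj | H]; first by apply: H; rewrite mem_iota; lia.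
by apply/allP => j; rewrite mem_iota => Hj; apply: H; lia.
Qed.

Lemma size_acode j w : size (acode_rec j w) = j.
Proof. by elim: j w => //= j IH w; rewrite size_rcons IH. Qed.

Lemma acode_step n w :
  acode_rec n.+1 w = rcons (acode_rec n (delete_at (index n.+1 (map fst w)) w))
     ((index n.+1 (map fst w)).+1, (letter_at w (index n.+1 (map fst w))).2).
Proof. by []. Qed.

Lemma letter_rcons s x i : letter_at (rcons s x) i =
  if i < size s then letter_at s i else if i == size s then x else (0,0).
Proof. by rewrite /letter_at nth_rcons. Qed.

Lemma nth_del s p i : p < size s ->
  letter_at (delete_at p s) i = letter_at s (if i < p then i else i.+1).
Proof.
move=> lt; rewrite /letter_at /delete_at nth_cat size_take lt.
case: ifP => h; first by rewrite nth_take.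
by rewrite nth_drop; congr nth; lia.
Qed.

Lemma size_del s p : p < size s -> size (delete_at p s) = (size s).-1.
Proof. move=> lt; rewrite size_cat size_take size_drop lt. rewrite -subn1; lia. Qed.

Lemma valid_size n w : valid n w -> size w = n.
Proof. by move/perm_size; rewrite size_map size_iota. Qed.

Lemma valid_val n w i : valid n w -> i < size w -> 0 < (letter_at w i).1 <= n.
Proof.
move=> V lt; have := map_f fst (mem_nth (0,0) lt).
by rewrite (perm_mem V) mem_iota /letter_at add1n ltnS.
Qed.

Lemma valid_inj n w i j : valid n w -> i < size w -> j < size w ->
  (letter_at w i).1 = (letter_at w j).1 -> i = j.
Proof.
move=> V li lj e; apply/eqP; rewrite -(nth_uniq 0 (s := map fst w)) ?size_map //.
  by rewrite !(nth_map (0,0)) // e.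
by rewrite (perm_uniq V) iota_uniq.
Qed.

Lemma step_p n w : valid n.+1 w -> index n.+1 (map fst w) < n.+1.
Proof.
move=> V; rewrite -{2}(valid_size V) -(size_map fst) index_mem (perm_mem V) mem_iota; lia.
Qed.

Lemma step_np n w : valid n.+1 w -> (letter_at w (index n.+1 (map fst w))).1 = n.+1.
Proof.
move=> V; have lt : index n.+1 (map fst w) < size w by rewrite (valid_size V) step_p.
rewrite /letter_at -(nth_map (0,0) 0) // nth_index // (perm_mem V) mem_iota; lia.
Qed.

Lemma step_valid n w : valid n.+1 w -> valid n (delete_at (index n.+1 (map fst w)) w).
Proof.
move=> V; have lt : index n.+1 (map fst w) < size w by rewrite (valid_size V) step_p.
set p := index _ _ in lt *.
rewrite /valid /delete_at map_cat map_take map_drop.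
have E : map fst w = take p (map fst w) ++ n.+1 :: drop p.+1 (map fst w).
  rewrite -{1}(cat_take_drop p (map fst w)) (drop_nth 0) ?size_map //.
  by rewrite nth_index // (perm_mem V) mem_iota; lia.
rewrite -(perm_cons n.+1).
have V' : perm_eq (map fst w) (iota 1 n.+1) := V; rewrite E in V'.
rewrite -cat1s perm_catCA in V'.
apply: (perm_trans V'); have := iotaD 1 n 1; rewrite addn1 => ->; rewrite perm_catC add1n /=. exact: perm_refl.
Qed.

Definition link (p q q' : nat) := ((q' < p) && (q == q')) || ((p <= q') && (q == q'.+1)).

Lemma link_ex q p : q != p -> exists q', link p q q'.
Proof.
move=> ne; exists (if q < p then q else q - 1); rewrite /link.
case: (ltnP q p) => h; lia.
Qed.

Lemma link_ex' q' p : exists q, link p q q'.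
Proof.
exists (if q' < p then q' else q'.+1); rewrite /link.
case: (ltnP q' p) => h; lia.
Qed.

Lemma link_nth s p q q' : p < size s -> link p q q' ->
  letter_at (delete_at p s) q' = letter_at s q.
Proof.
move=> ps l; rewrite nth_del //; congr letter_at.
move: l; rewrite /link; case: ltnP => h; lia.
Qed.

Lemma later_tr n s p q q' (R : pred cletter) : size s = n.+1 -> p < n.+1 -> link p q q' ->
  (forall j, q < j < n.+1 -> j != p -> R (letter_at s j)) <->
  (forall j', q' < j' < n -> R (letter_at (delete_at p s) j')).
Proof.
move=> ss ps l; split => H j Hj.
  have [k lk] := link_ex' j p.
  rewrite (link_nth _ lk) ?ss //; apply: H; move: l lk; rewrite /link; lia.
move=> jp; have [k lk] := link_ex jp.
rewrite -(link_nth _ lk) ?ss //; apply: H; move: l lk Hj jp; rewrite /link; lia.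
Qed.

Lemma earlier_tr n s p q q' (R : pred cletter) : size s = n.+1 -> p < n.+1 -> link p q q' ->
  (forall j, j < q -> j != p -> R (letter_at s j)) <->
  (forall j', j' < q' -> R (letter_at (delete_at p s) j')).
Proof.
move=> ss ps l; split => H j Hj.
  have [k lk] := link_ex' j p.
  rewrite (link_nth _ lk) ?ss //; apply: H; move: l lk Hj; rewrite /link; lia.
move=> jp; have [k lk] := link_ex jp.
rewrite -(link_nth _ lk) ?ss //; apply: H; move: l lk Hj jp; rewrite /link; lia.
Qed.

Lemma RmilP w x : reflect (exists2 i, i < size w &
  (forall j, i < j < size w -> (letter_at w i).1 < (letter_at w j).1) /\ x = letter_at w i)
  (x \in Rmil w).
Proof.
apply: (iffP (memP_stat _ _ _ _)) => -[i il [H ->]]; exists i => //; split => //.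
- by move/all_iotaP: H.
- by apply/all_iotaP.
Qed.

Lemma RmipP w x : reflect (exists2 i, i < size w &
  (forall j, i < j < size w -> (letter_at w i).1 < (letter_at w j).1) /\ x = (i.+1, (letter_at w i).2))
  (x \in Rmip w).
Proof.
apply: (iffP (memP_stat _ _ _ _)) => -[i il [H ->]]; exists i => //; split => //.
- by move/all_iotaP: H.
- by apply/all_iotaP.
Qed.

Lemma LmilP w x : reflect (exists2 i, i < size w &
  (forall j, j < i -> (letter_at w i).1 < (letter_at w j).1) /\ x = letter_at w i)
  (x \in Lmil w).
Proof.
apply: (iffP (memP_stat _ _ _ _)) => -[i il [H ->]]; exists i => //; split => //.
- by move/all_iota0P: H.
- by apply/all_iota0P.
Qed.

Lemma LmalP w x : reflect (exists2 i, i < size w &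
  (forall j, j < i -> (letter_at w j).1 < (letter_at w i).1) /\ x = letter_at w i)
  (x \in Lmal w).
Proof.
apply: (iffP (memP_stat _ _ _ _)) => -[i il [H ->]]; exists i => //; split => //.
- by move/all_iota0P: H.
- by apply/all_iota0P.
Qed.

Lemma LmapP w x : reflect (exists2 i, i < size w &
  (forall j, j < i -> (letter_at w j).1 < (letter_at w i).1) /\ x = (i.+1, (letter_at w i).2))
  (x \in Lmap w).
Proof.
apply: (iffP (memP_stat _ _ _ _)) => -[i il [H ->]]; exists i => //; split => //.
- by move/all_iota0P: H.
- by apply/all_iota0P.
Qed.

Lemma MaxP w x : reflect (exists2 i, i < size w &
  (letter_at w i).1 = i.+1 /\ x = (i.+1, (letter_at w i).2)) (x \in Max w).
Proof.
apply: (iffP (memP_stat _ _ _ _)) => -[i il [H ->]]; exists i => //; split => //.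
- exact/eqP.
- exact/eqP.
Qed.

Lemma MinP w x : reflect (exists2 i, i < size w &
  (letter_at w i).1 = 1 /\ x = (i.+1, (letter_at w i).2)) (x \in Min w).
Proof.
apply: (iffP (memP_stat _ _ _ _)) => -[i il [H ->]]; exists i => //; split => //.
- exact/eqP.
- exact/eqP.
Qed.

Lemma link_lt p q q' n : p < n.+1 -> link p q q' -> (q < n.+1) = (q' < n).
Proof. by rewrite /link; lia. Qed.

Lemma link_ne p q q' : link p q q' -> q != p.
Proof. by rewrite /link; lia. Qed.

Lemma step_ne n w i : valid n.+1 w -> i < n.+1 -> i != index n.+1 (map fst w) ->
  (letter_at w i).1 <= n.
Proof.
move=> V il ip; have Vs := valid_size V.
have := valid_val V (i:=i); rewrite Vs => /(_ il) /andP[_].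
rewrite leq_eqVlt ltnS => /orP[/eqP e|//].
move: ip; rewrite (valid_inj V (i:=i) (j:=index n.+1 (map fst w))) ?Vs ?eqxx ?step_p //.
by rewrite e step_np.
Qed.

Lemma part1 n w : valid n w -> Rmil w =i Max (acode_rec n w).
Proof.
elim: n w => [|n IH] w V.
  by rewrite (size0nil (valid_size V)).
have Vs := valid_size V.
have pl := step_p V. have np := step_np V.
have V' := step_valid V.
have ne := step_ne V.
rewrite acode_step.
move: pl np V' ne; set p := index n.+1 (map fst w) => pl np V' ne.
set t := (letter_at w p).2.
set w' := delete_at p w in V' *.
have Vs' := valid_size V'.
have IH' := IH w' V'.
set a' := acode_rec n w' in IH' *.
have sa : size a' = n := size_acode n w'.
have wp : letter_at w p = (n.+1, t) by rewrite [LHS]surjective_pairing np.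
move=> x; apply/RmilP/MaxP; rewrite size_rcons sa Vs.
- case=> q ql [Hq ->].
  case: (eqVneq q p) => [qp | qp]; first subst q.
  + have pn : p = n.
      case: (ltnP p n) => lt; last by lia.
      have := Hq n; rewrite lt ltnSn => /(_ isT).
      have := ne n (ltnSn n); rewrite neq_ltn lt orbT => /(_ isT). lia.
    exists n => //; rewrite letter_rcons sa ltnn eqxx /=; split; [by rewrite pn | by rewrite wp].
  + have [q' l] := link_ex qp.
    have : letter_at w q \in Rmil w'.
      apply/RmilP; exists q'; rewrite Vs'; first by rewrite -(link_lt pl l).
      rewrite (link_nth _ l) ?Vs //; split => //.
      apply: (later_tr (fun y => (letter_at w q).1 < y.1) Vs pl l).1 => j Hj _; exact: Hq.
    rewrite IH' => /MaxP[i il [Hi ->]]; exists i; first by rewrite -sa ltnS ltnW.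
    by rewrite letter_rcons il.
- case=> i il [Hi ->].
  rewrite letter_rcons sa in Hi *.
  case: (ltnP i n) => iln.
  + rewrite iln in Hi *.
    have : (i.+1, (letter_at a' i).2) \in Max a' by apply/MaxP; exists i; rewrite ?sa.
    rewrite -IH' => /RmilP[q' ql' [Hq' E]]; rewrite Vs' in ql' Hq'.
    have [q l] := link_ex' q' p.
    exists q; first by rewrite (link_lt pl l).
    rewrite E (link_nth _ l) ?Vs //; split => //.
    move=> j Hj; case: (eqVneq j p) => [-> | jp].
      rewrite np; have := ne q; rewrite (link_lt pl l) ql' (link_ne l) => /(_ isT isT); lia.
    apply: (later_tr (fun y => (letter_at w q).1 < y.1) Vs pl l).2 => //.
    by move=> j' Hj'; rewrite -(link_nth _ l) ?Vs //; apply: Hq'.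
  + have ein : i = n by lia.
    subst i; rewrite ltnn eqxx /= in Hi *.
    have pn : p = n by case: Hi.
    exists p; first by rewrite pn.
    split; first by move=> j; rewrite pn; lia.
    by rewrite wp.
Qed.

Ltac header n w V IH :=
  let Vs := fresh "Vs" in let pl := fresh "pl" in let np := fresh "np" in
  let V' := fresh "V'" in let ne := fresh "ne" in let p := fresh "p" in
  let t := fresh "t" in let w' := fresh "w'" in let Vs' := fresh "Vs'" in
  let IH' := fresh "IH'" in let a' := fresh "a'" in let sa := fresh "sa" in
  let wp := fresh "wp" in
  have Vs := valid_size V;
  have pl := step_p V; have np := step_np V;
  have V' := step_valid V;
  have ne := step_ne V;
  rewrite acode_step;
  move: pl np V' ne; set p := index n.+1 (map fst w) => pl np V' ne;
  set t := (letter_at w p).2;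
  set w' := delete_at p w in V' *;
  have Vs' := valid_size V';
  have IH' := IH w' V';
  set a' := acode_rec n w' in IH' *;
  have sa : size a' = n := size_acode n w';
  have wp : letter_at w p = (n.+1, t) by rewrite [LHS]surjective_pairing np.

Lemma part2 n w : valid n w -> Lmil w =i Min (acode_rec n w).
Proof.
elim: n w => [|n IH] w V.
  by rewrite (size0nil (valid_size V)).
header n w V IH.
move=> x; apply/LmilP/MinP; rewrite size_rcons sa Vs.
- case=> q ql [Hq ->].
  case: (eqVneq q p) => [qp | qp]; first subst q.
  + have p0 : p = 0.
      case: (posnP p) => // lt.
      have := Hq 0 lt. have := ne 0 isT; rewrite eq_sym -lt0n lt => /(_ isT). lia.
    exists n => //; rewrite letter_rcons sa ltnn eqxx /=; split; [by rewrite p0 | by rewrite wp].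
  + have [q' l] := link_ex qp.
    have : letter_at w q \in Lmil w'.
      apply/LmilP; exists q'; rewrite ?Vs'; first by rewrite -(link_lt pl l).
      rewrite (link_nth _ l) ?Vs //; split => //.
      apply: (earlier_tr (fun y => (letter_at w q).1 < y.1) Vs pl l).1 => j Hj _; exact: Hq.
    rewrite IH' => /MinP[i il [Hi ->]]; exists i; first by rewrite -sa ltnS ltnW.
    by rewrite letter_rcons il.
- case=> i il [Hi ->].
  rewrite letter_rcons sa in Hi *.
  case: (ltnP i n) => iln.
  + rewrite iln in Hi *.
    have : (i.+1, (letter_at a' i).2) \in Min a' by apply/MinP; exists i; rewrite ?sa.
    rewrite -IH' => /LmilP[q' ql' [Hq' E]]; rewrite Vs' in ql' Hq'.
    have [q l] := link_ex' q' p.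
    exists q; first by rewrite (link_lt pl l).
    rewrite E (link_nth _ l) ?Vs //; split => //.
    move=> j Hj; case: (eqVneq j p) => [-> | jp].
      rewrite np; have := ne q; rewrite (link_lt pl l) ql' (link_ne l) => /(_ isT isT); lia.
    apply: (earlier_tr (fun y => (letter_at w q).1 < y.1) Vs pl l).2 => //.
    by move=> j' Hj'; rewrite -(link_nth _ l) ?Vs //; apply: Hq'.
  + have ein : i = n by lia.
    subst i; rewrite ltnn eqxx /= in Hi *.
    have p0 : p = 0 by case: Hi.
    exists p; first by rewrite p0.
    split; first by move=> j; rewrite p0.
    by rewrite wp.
Qed.

Lemma part3 n w : valid n w -> Lmap w =i Rmil (acode_rec n w).
Proof.
elim: n w => [|n IH] w V.
  by rewrite (size0nil (valid_size V)).
header n w V IH.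
move=> x; apply/LmapP/RmilP; rewrite size_rcons sa Vs.
- case=> q ql [Hq ->].
  case: (eqVneq q p) => [qp | qp]; first subst q.
  + exists n => //; rewrite letter_rcons sa ltnn eqxx /=; split => //.
    by move=> j; lia.
  + have qlp : q < p.
      case: (ltnP q p) => // pq.
      have := Hq p; rewrite np; have := ne q ql qp. lia.
    have l : link p q q by rewrite /link qlp eqxx.
    have : (q.+1, (letter_at w' q).2) \in Lmap w'.
      apply/LmapP; exists q; rewrite ?Vs'; first lia.
      rewrite (link_nth _ l) ?Vs //; split => //.
      apply: (earlier_tr (fun y => y.1 < (letter_at w q).1) Vs pl l).1 => j Hj _; exact: Hq.
    rewrite IH' (link_nth _ l) ?Vs // => /RmilP[i il [Hi E]].
    rewrite sa in il Hi.
    exists i; first lia.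
    rewrite !letter_rcons sa il -E; split => // j Hj.
    case: (ltnP j n) => jn.
      rewrite letter_rcons sa jn E; apply: Hi; rewrite jn andbT; by case/andP: Hj.
    have -> : j = n by lia.
    by rewrite letter_rcons sa ltnn eqxx /=.
- case=> i il [Hi ->].
  case: (ltnP i n) => iln.
  + have Ei : letter_at (rcons a' (p.+1,t)) i = letter_at a' i by rewrite letter_rcons sa iln.
    have Hn := Hi n; rewrite ltnSn iln Ei letter_rcons sa ltnn eqxx /= in Hn; have {}Hn := Hn isT.
    rewrite Ei.
    have : letter_at a' i \in Rmil a'.
      apply/RmilP; exists i; rewrite ?sa //; split => // j Hj.
      case/andP: Hj => h1 h2.
      by have := Hi j; rewrite h1 ltnW //= Ei letter_rcons sa h2 => /(_ isT).
    rewrite -IH' => /LmapP[q' ql' [Hq' E]]; rewrite Vs' in ql' Hq'.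
    have q'p : q' < p by move: Hn; rewrite E /=.
    have l : link p q' q' by rewrite /link q'p eqxx.
    exists q'; first lia.
    rewrite E (link_nth _ l) ?Vs //; split => //.
    move=> j jq.
    have H2 := (earlier_tr (fun y => y.1 < (letter_at w q').1) Vs pl l).2.
    apply: (H2 _ j jq); last by lia.
    by move=> j' Hj'; rewrite -(link_nth _ l) ?Vs //; apply: Hq'.
  + have ein : i = n by lia.
    subst i; rewrite letter_rcons sa ltnn eqxx /=.
    exists p => //; split => //.
    by move=> j jp; rewrite np; apply: (leq_ltn_trans (ne j _ _)); lia.
Qed.

Lemma L4 n w q : valid n w -> q < n -> (forall j, j < q -> (letter_at w j).1 < (letter_at w q).1) ->
  (letter_at (acode_rec n w) ((letter_at w q).1 - 1)).1 = q.+1.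
Proof.
move=> V; elim: n w V q => [|n IH] w V q //.
header n w V IH.
move=> ql Hq.
case: (eqVneq q p) => [qp | qp]; first subst q.
  by rewrite np subn1 /= letter_rcons sa ltnn eqxx.
have qlp : q < p.
  case: (ltnP q p) => // pq.
  have := Hq p; rewrite np; have := ne q ql qp. lia.
have l : link p q q by rewrite /link qlp eqxx.
have wq := ne q ql qp; have := valid_val V (i := q); rewrite Vs => /(_ ql) /andP[wq0 _].
have lt : (letter_at w q).1 - 1 < n by lia.
rewrite letter_rcons sa lt -(link_nth _ l) ?Vs //; apply: IH'; first lia.
move=> j jq; have H2 := (earlier_tr (fun y => y.1 < (letter_at w q).1) Vs pl l).1.
rewrite (link_nth _ l) ?Vs //; apply: (H2 _ j jq).
by move=> k kq _; apply: Hq.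
Qed.

Lemma part4 n w : valid n w -> Lmal w =i Rmip (acode_rec n w).
Proof.
elim: n w => [|n IH] w V.
  by rewrite (size0nil (valid_size V)).
have L4' := @L4 n.
header n w V IH.
move=> x; apply/LmalP/RmipP; rewrite size_rcons sa Vs.
- case=> q ql [Hq ->].
  case: (eqVneq q p) => [qp | qp]; first subst q.
  + exists n => //; rewrite letter_rcons sa ltnn eqxx /=; split; last by rewrite wp.
    by move=> j; lia.
  + have qlp : q < p.
      case: (ltnP q p) => // pq.
      have := Hq p; rewrite np; have := ne q ql qp. lia.
    have l : link p q q by rewrite /link qlp eqxx.
    have Hq' : forall j, j < q -> (letter_at w' j).1 < (letter_at w' q).1.
      move=> j jq; have H2 := (earlier_tr (fun y => y.1 < (letter_at w q).1) Vs pl l).1.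
      rewrite (link_nth _ l) ?Vs //; apply: (H2 _ j jq).
      by move=> k kq _; apply: Hq.
    have : letter_at w' q \in Lmal w' by apply/LmalP; exists q; rewrite ?Vs' //; lia.
    rewrite IH' => /RmipP[i il [Hi E]].
    rewrite sa in il Hi.
    have qn : q < n by lia.
    have L := L4' w' q V' qn Hq'; rewrite E /= subn1 /= in L.
    exists i; first lia.
    rewrite -(link_nth _ l) ?Vs // E letter_rcons sa il; split => // j Hj.
    rewrite letter_rcons sa.
    case: (ltnP j n) => jn.
      by apply: Hi; rewrite jn andbT; case/andP: Hj.
    have -> : j = n by lia.
    by rewrite eqxx /= -/a' L.
- case=> i il [Hi ->].
  case: (ltnP i n) => iln.
  + have Ei : letter_at (rcons a' (p.+1,t)) i = letter_at a' i by rewrite letter_rcons sa iln.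
    have Hn := Hi n; rewrite ltnSn iln Ei letter_rcons sa ltnn eqxx /= in Hn; have {}Hn := Hn isT.
    rewrite Ei.
    have : (i.+1, (letter_at a' i).2) \in Rmip a'.
      apply/RmipP; exists i; rewrite ?sa //; split => // j Hj.
      case/andP: Hj => h1 h2.
      by have := Hi j; rewrite h1 ltnW //= Ei letter_rcons sa h2 => /(_ isT).
    rewrite -IH' => /LmalP[q' ql' [Hq' E]]; rewrite Vs' in ql' Hq'.
    have L := L4' w' q' V' ql' Hq'; rewrite -E /= subn1 /= in L; rewrite -/a' in L.
    have q'p : q' < p by lia.
    have l : link p q' q' by rewrite /link q'p eqxx.
    exists q'; first lia.
    rewrite E (link_nth _ l) ?Vs //; split => //.
    move=> j jq.
    have H2 := (earlier_tr (fun y => y.1 < (letter_at w q').1) Vs pl l).2.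
    apply: (H2 _ j jq); last by lia.
    by move=> j' Hj'; rewrite -(link_nth _ l) ?Vs //; apply: Hq'.
  + have ein : i = n by lia.
    subst i; rewrite letter_rcons sa ltnn eqxx /=.
    exists p => //; split; last by rewrite wp.
    by move=> j jp; rewrite np; apply: (leq_ltn_trans (ne j _ _)); lia.
Qed.

Lemma colorpart_eq (S S' : seq cletter) t : S =i S' -> colorpart S t =i colorpart S' t.
Proof.
move=> E k; apply/mapP/mapP => -[y]; rewrite mem_filter => /andP[h1 h2] ->;
  exists y => //; rewrite mem_filter h1 /=; [by rewrite -E | by rewrite E].
Qed.

Theorem lemma3p2 (r n : nat) (w : cword) :
  in_G r n w ->
  let a := acode n w in
  [/\ (Rmil w =i Max a /\ forall t, t < r -> colorpart (Rmil w) t =i colorpart (Max a) t),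
      (Lmil w =i Min a /\ forall t, t < r -> colorpart (Lmil w) t =i colorpart (Min a) t),
      (Lmap w =i Rmil a /\ forall t, t < r -> colorpart (Lmap w) t =i colorpart (Rmil a) t) &
      (Lmal w =i Rmip a /\ forall t, t < r -> colorpart (Lmal w) t =i colorpart (Rmip a) t)].
Proof.
move=> /andP[V _] a.
have E1 := part1 V; have E2 := part2 V; have E3 := part3 V; have E4 := part4 V.
by split; split => // t _; apply: colorpart_eq.
Qed.
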